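(* For all integers $m\ge 2$, $r\ge 2$ and $i\in\{1,\ldots,r\}$ we have $\mu(mi,r)\mid \alpha_{m,r}(i)$. In particular, $\mu(m,r)\mid\alpha_{m,r}(i)$ for all $i\in\{1,\ldots,r\}$.
   Context: For positive integers $a,b$, $\mu(a,b):=\dfrac{a}{\gcd(a,b)}$. For integers $m\ge2$, $r\ge1$, the numbers $\alpha_{m,r}(1),\ldots,\alpha_{m,r}(r)$ are the unique integers such that $\binom{mn+r-1}{r}=\sum_{i=1}^{r}\alpha_{m,r}(i)\binom{n+i-1}{i}$ for all positive integers $n$. *)

(* Defs.v *)
From mathcomp Require Import all_boot all_order all_algebra.
Set Implicit Arguments. Unset Strict Implicit. Unset Printing Implicit Defensive.
Import Order.TTheory GRing.Theory Num.Theory.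

Definition mu (a b : nat) : nat := a %/ gcdn a b.

(* alpha : nat -> int is the family alpha_{m,r}(1..r): the defining identity
   C(mn+r-1, r) = sum_{i=1}^r alpha(i) C(n+i-1, i) for all positive n. *)
Definition is_alpha (m r : nat) (alpha : nat -> int) : Prop :=
  forall n : nat, 0 < n ->
    Posz ('C(m * n + r - 1, r)) =
      (\sum_(1 <= i < r.+1) alpha i * Posz ('C(n + i - 1, i)))%R.

(* Main.v *)
Require Import Defs.
From mathcomp Require Import all_boot all_order all_algebra.
From mathcomp Require Import ring zify.
Import Order.TTheory GRing.Theory Num.Theory.
Local Open Scope ring_scope.
Lemma mu_dvd a r x : (0 < a)%N -> (a %| r * x)%N -> (a %/ gcdn a r %| x)%N.
Proof.
move=> a0 h.
have g0 : (0 < gcdn a r)%N by rewrite gcdn_gt0 a0.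
have ea : a = (a %/ gcdn a r * gcdn a r)%N by rewrite divnK // dvdn_gcdl.
have er : r = (r %/ gcdn a r * gcdn a r)%N by rewrite divnK // dvdn_gcdr.
have cop : coprime (a %/ gcdn a r) (r %/ gcdn a r).
  rewrite /coprime; apply/eqP.
  have : (gcdn (a %/ gcdn a r) (r %/ gcdn a r) * gcdn a r = 1 * gcdn a r)%N.
    by rewrite muln_gcdl -ea -er mul1n.
  by move/eqP; rewrite eqn_pmul2r // => /eqP.
rewrite -(Gauss_dvdr _ cop).
rewrite -(dvdn_pmul2r g0) mulnAC -er -ea //.
Qed.
Lemma prod_pos (a i : nat) :
  \prod_(t < i) ((a.+1 + t)%N%:Z) = ('C(a + i, i) * i`!)%N%:Z.
Proof.
rewrite bin_ffact; elim: i => [|i IH]; first by rewrite big_ord0 ffactn0.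
rewrite big_ord_recr /= IH addnS ffactSS -PoszM mulnC.
by rewrite addSn.
Qed.
Lemma prod_neg (k i : nat) :
  \prod_(t < i) ((t%:Z) - k%:Z) = (-1) ^+ i * ('C(k, i) * i`!)%N%:Z.
Proof.
rewrite bin_ffact; elim: i => [|i IH]; first by rewrite big_ord0 ffactn0 expr0 mul1r.
rewrite big_ord_recr /= IH ffactnSr.
case: (leqP i k) => hik.
  rewrite PoszM -subzn // exprS; ring.
by rewrite ffact_small // mul0n !mulr0 ?mul0r.
Qed.

Lemma key m r alpha : (0 < m)%N -> is_alpha m r alpha -> forall k : nat,
  (-1) ^+ r * ('C(m * k, r))%:Z = \sum_(1 <= i < r.+1) alpha i * ((-1) ^+ i * ('C(k, i))%:Z).
Proof.
move=> m0 H k.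
pose F i := alpha i * (r`! %/ i`!)%N%:Z.
pose P : {poly int} := \prod_(t < r) ((m%:Z)%:P * 'X + (t%:Z)%:P)
   - \sum_(1 <= i < r.+1) (F i)%:P * \prod_(t < i) ('X + (t%:Z)%:P).
have hev x : P.[x] = \prod_(t < r) (m%:Z * x + t%:Z)
     - \sum_(1 <= i < r.+1) F i * \prod_(t < i) (x + t%:Z).
  rewrite /P hornerD hornerN horner_sum horner_prod.
  under eq_bigr do rewrite hornerD hornerC hornerM hornerC hornerX.
  congr (_ - _); apply: eq_bigr => i _.
  rewrite hornerM hornerC horner_prod; congr (_ * _); apply: eq_bigr => t _.
  by rewrite hornerD hornerX hornerC.
have hfac i : (i <= r)%N -> ((r`! %/ i`!) * i`!)%N = r`!.
  move=> hi; rewrite divnK //.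
  by rewrite -(bin_fact hi) dvdn_mull // dvdn_mulr.
have hpos n : (0 < n)%N -> P.[n%:Z] = 0.
  move=> n0; rewrite hev.
  have e1 : \prod_(t < r) (m%:Z * n%:Z + t%:Z) = ('C(m * n + r - 1, r) * r`!)%N%:Z.
    have := prod_pos (m * n).-1 r.
    rewrite (_ : ((m * n).-1 + r = m * n + r - 1)%N); last first.
      have : (0 < m * n)%N by rewrite muln_gt0 m0 n0.
      lia.
    move<-; apply: eq_bigr => t _.
    by rewrite prednK ?muln_gt0 ?m0 ?n0 // PoszD PoszM.
  rewrite e1.
  rewrite (eq_big_nat _ _ (F2 := fun i => r`!%:Z * (alpha i * ('C(n + i - 1, i))%:Z))); last first.
    move=> i /andP [i1 ir].
    have := prod_pos n.-1 i.
    rewrite (_ : (n.-1 + i = n + i - 1)%N); last by lia.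
    rewrite (_ : \prod_(t < i) (n.-1.+1 + t)%N%:Z = \prod_(t < i) (n%:Z + t%:Z)); last first.
      by apply: eq_bigr => t _; rewrite prednK.
    move->.
    have -> : (r`!)%:Z = ((r`! %/ i`!)%N%:Z * (i`!)%:Z) by rewrite -PoszM hfac.
    rewrite /F PoszM; ring.
  by rewrite -mulr_sumr -H // PoszM mulrC subrr.
have P0 : P = 0.
  apply/eqP; apply: contraT => nz.
  have := max_poly_roots nz (rs := [seq (n.+1)%:Z | n <- iota 0 (size P)]).
  rewrite size_map size_iota ltnn; apply.
    by apply/allP => x /mapP [n _ ->]; rewrite /root hpos.
  by rewrite map_inj_uniq ?iota_uniq // => a b [].
have := congr1 (horner^~ (- k%:Z)) P0; rewrite horner0 hev.
rewrite (_ : \prod_(t < r) (m%:Z * - k%:Z + t%:Z) = \prod_(t < r) (t%:Z - (m * k)%N%:Z)); last first.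
  by apply: eq_bigr => t _; rewrite PoszM; ring.
rewrite prod_neg.
rewrite (eq_big_nat _ _ (F2 := fun i => r`!%:Z * (alpha i * ((-1) ^+ i * ('C(k, i))%:Z)))); last first.
  move=> i /andP [i1 ir].
  rewrite (_ : \prod_(t < i) (- k%:Z + t%:Z) = \prod_(t < i) (t%:Z - k%:Z)); last first.
    by apply: eq_bigr => t _; rewrite addrC.
  rewrite prod_neg.
  have -> : (r`!)%:Z = ((r`! %/ i`!)%N%:Z * (i`!)%:Z) by rewrite -PoszM hfac.
  rewrite /F PoszM; ring.
rewrite -mulr_sumr PoszM.
set S := \sum_(_ <= _ < _) _.
move=> h; apply/eqP; rewrite -subr_eq0.
have : (r`!)%:Z * ((-1) ^+ r * ('C(m * k, r))%:Z - S) == 0 by rewrite -h; apply/eqP; ring.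
by rewrite mulf_eq0 => /orP [|//]; rewrite eqz_nat; case: (r`!) (fact_gt0 r).
Qed.

Lemma divs m r alpha : (0 < m)%N -> is_alpha m r alpha -> forall k, (1 <= k <= r)%N ->
  ((m * k)%N%:Z %| r%:Z * alpha k)%Z.
Proof.
move=> hm H k; elim/ltn_ind: k => k IH /andP [k1 kr].
have K := @key m r alpha hm H k.
rewrite (bigD1_seq k) ?mem_index_iota ?iota_uniq //= in K; last by rewrite k1 ltnS.
rewrite binn mulr1 in K.
set S := \sum_(_ <- _ | _) _ in K.
have h1 : ((m * k)%N%:Z %| r%:Z * ((-1) ^+ r * ('C(m * k, r))%:Z))%Z.
  have := mul_bin_diag (m * k) r.-1; rewrite prednK; last by lia.
  move=> e; apply/dvdzP; exists ((-1) ^+ r * ('C((m * k).-1, r.-1))%:Z).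
  rewrite mulrCA -PoszM -e PoszM; ring.
have h2 : ((m * k)%N%:Z %| r%:Z * S)%Z.
  rewrite /S mulr_sumr big_seq_cond; apply: rpred_sum => i /andP [].
  rewrite mem_index_iota => /andP [i1 ir] ik.
  case: (ltngtP i k) => [ilk | kli | ek]; last by rewrite ek eqxx in ik.
    have /dvdzP [q hq] := IH i ilk (introT andP (conj i1 (ltnSE ir))).
    have := mul_bin_diag k i.-1; rewrite prednK //.
    move=> e; apply/dvdzP; exists (q * (-1) ^+ i * ('C(k.-1, i.-1))%:Z).
    rewrite mulrA hq.
    have e' : (i%:Z * ('C(k, i))%:Z) = k%:Z * ('C(k.-1, i.-1))%:Z by rewrite -!PoszM e.
    rewrite !PoszM.
    have -> : q * (m%:Z * i%:Z) * ((-1) ^+ i * ('C(k, i))%:Z) = q * m%:Z * (-1) ^+ i * (i%:Z * ('C(k, i))%:Z) by ring.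
    rewrite e'; ring.
  by rewrite bin_small // !mulr0 dvdz0.
have h3 : ((m * k)%N%:Z %| (r%:Z * alpha k) * (-1) ^+ k)%Z.
  have -> : (r%:Z * alpha k) * (-1) ^+ k = r%:Z * ((-1) ^+ r * ('C(m * k, r))%:Z) - r%:Z * S.
    by rewrite K; ring.
  exact: rpredB.
have := dvdz_mulr ((-1) ^+ k) h3.
by rewrite -mulrA -expr2 -exprM mulnC exprM sqrrN !expr1n mulr1.
Qed.

Local Close Scope ring_scope.
Theorem lemma2p6 (m r : nat) (alpha : nat -> int) :
  2 <= m -> 2 <= r -> is_alpha m r alpha ->
  forall i : nat, 1 <= i <= r ->
    (Posz (mu (m * i) r) %| alpha i)%Z /\ (Posz (mu m r) %| alpha i)%Z.
Proof.
move=> hm hr H i hi.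
have hm0 : (0 < m)%N by apply: ltnW.
have := @divs m r alpha hm0 H i hi.
move=> d; rewrite dvdzE abszM /= in d.
have i0 : (0 < i)%N by case/andP: hi.
split; rewrite dvdzE /= /mu; apply: mu_dvd.
- by rewrite muln_gt0 hm0.
- exact: d.
- exact: hm0.
- exact: dvdn_trans (dvdn_mulr i (dvdnn m)) d.
Qed.
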